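(* Let $A$ be a finite skew brace such that $\Theta(A)$ has exactly one vertex. Then $(A,+)$ is abelian.
   Context: A skew brace is a triple $(A,+,\circ)$ where $(A,+)$ and $(A,\circ)$ are groups with $a\circ(b+c)=a\circ b-a+a\circ c$. $\lambda_a(b)=-a+a\circ b$; $\theta_{(a,b)}(c)=a+\lambda_b(c)-a$ defines an action of $(A,+)\rtimes_\lambda(A,\circ)$ on $(A,+)$ by automorphisms. $\Theta(A)$ is the graph whose vertices are the $\theta$-orbits of size $>1$, two distinct vertices $L_1,L_2$ adjacent iff $\gcd(|L_1|,|L_2|)\ne1$. *)

(* Defs.v *)
From mathcomp Require Import all_boot.
Set Implicit Arguments. Unset Strict Implicit. Unset Printing Implicit Defensive.

Record is_group (T : Type) (mul : T -> T -> T) (inv : T -> T) (e : T) : Prop := {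
  grp_assoc : forall x y z, mul x (mul y z) = mul (mul x y) z;
  grp_id_l  : forall x, mul e x = x;
  grp_id_r  : forall x, mul x e = x;
  grp_inv_l : forall x, mul (inv x) x = e;
  grp_inv_r : forall x, mul x (inv x) = e }.

Record skew_brace (T : finType) := SkewBrace {
  sb_add : T -> T -> T;
  sb_opp : T -> T;
  sb_zero : T;
  sb_circ : T -> T -> T;
  sb_cinv : T -> T;
  sb_one : T;
  sb_add_group : is_group sb_add sb_opp sb_zero;
  sb_circ_group : is_group sb_circ sb_cinv sb_one;
  sb_compat : forall a b c,
    sb_circ a (sb_add b c) =
    sb_add (sb_add (sb_circ a b) (sb_opp a)) (sb_circ a c) }.

Section SkewBraceDefs.
Variables (T : finType) (A : skew_brace T).
Local Notation "x + y" := (sb_add A x y).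
Local Notation "- x" := (sb_opp A x).
Local Notation "x 'o' y" := (sb_circ A x y) (at level 40).

Definition sb_lambda (a b : T) : T := - a + (a o b).

Definition sb_theta (a b c : T) : T := (a + sb_lambda b c) + - a.

(* the theta-orbit of c under (A,+) x|_lambda (A,o) *)
Definition theta_orbit (c : T) : {set T} :=
  [set sb_theta a b c | a in T, b in T].

Definition Theta_vertices : {set {set T}} :=
  [set L in [set theta_orbit c | c in T] | 1 < #|L|].

Definition Theta_adj (L1 L2 : {set T}) : bool :=
  [&& L1 \in Theta_vertices, L2 \in Theta_vertices, L1 != L2 &
      gcdn #|L1| #|L2| != 1].

Definition add_abelian : Prop := forall x y : T, x + y = y + x.
End SkewBraceDefs.

(* Main.v *)
From HB Require Import structures.
Require Import Defs.
From mathcomp Require Import all_boot all_fingroup all_solvable.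
Set Implicit Arguments. Unset Strict Implicit. Unset Printing Implicit Defensive.

Lemma key p i j k : prime p -> i < j -> p ^ i + p ^ j = p ^ k -> False.
Proof.
move=> pp ij e; have p1 := prime_gt1 pp.
have ik : i < k by rewrite -(ltn_exp2l _ _ p1) -e -addn1 leq_add2l expn_gt0 ltnW.
have : p ^ i.+1 %| p ^ i + p ^ j by rewrite e dvdn_Pexp2l.
by rewrite dvdn_addl ?dvdn_Pexp2l // ltnn.
Qed.
Lemma pnat_sum_eq p a b : prime p -> p.-nat a -> p.-nat b -> p.-nat (a + b) -> a = b.
Proof.
move=> pp /p_natP[i ->] /p_natP[j ->] /p_natP[k e].
case: (ltngtP i j) => [ij|ji|-> //]; first by case: (key pp ij e).
by rewrite addnC in e; case: (key pp ji e).
Qed.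

Section S.
Variables (T : finType) (A : skew_brace T).
Definition gT : Type := T.
HB.instance Definition _ := Finite.on gT.
HB.instance Definition _ := Finite_isGroup.Build gT
  (grp_assoc (sb_add_group A)) (grp_id_l (sb_add_group A)) (grp_inv_l (sb_add_group A)).
Local Open Scope group_scope.
Implicit Types a b c x y : gT.

Definition circ (x y : gT) : gT := sb_circ A x y.
Definition cinv (x : gT) : gT := sb_cinv A x.
Local Notation Gc := (sb_circ_group A).

Lemma circA (x y z : gT) : circ x (circ y z) = circ (circ x y) z.
Proof. exact: (grp_assoc (sb_circ_group A) x y z). Qed.
Lemma circ1x (x : gT) : circ (sb_one A) x = x. Proof. exact: (grp_id_l Gc). Qed.
Lemma circVx (x : gT) : circ (cinv x) x = sb_one A. Proof. exact: (grp_inv_l Gc). Qed.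
Lemma circxV (x : gT) : circ x (cinv x) = sb_one A. Proof. exact: (grp_inv_r Gc). Qed.


Lemma circI (b x y : gT) : circ b x = circ b y -> x = y.
Proof.
move=> h; rewrite -(circ1x x) -(circ1x y) -(circVx b).
by rewrite -!circA h.
Qed.

Lemma compat (a b c : gT) : circ a (b * c) = circ a b * a^-1 * circ a c.
Proof. exact: (sb_compat A a b c). Qed.

Lemma circ_a1 (a : gT) : circ a 1 = a.
Proof.
have := compat a 1 1; rewrite mulg1 => /(congr1 (mulg (circ a 1)^-1)).
rewrite mulVg -mulgA mulKg => h.
by rewrite -(mulKVg a (circ a 1)) -h mulg1.
Qed.

Lemma one_eq : sb_one A = 1 :> gT.
Proof. by rewrite -[RHS]circ1x circ_a1. Qed.

Definition lam (b x : gT) : gT := b^-1 * circ b x.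

Lemma lamM b x y : lam b (x * y) = lam b x * lam b y.
Proof. by rewrite /lam compat -!mulgA. Qed.

Lemma lam1 b : lam b 1 = 1.
Proof. by rewrite /lam circ_a1 mulVg. Qed.

Lemma lamV b x : lam b x^-1 = (lam b x)^-1.
Proof.
have := lamM b x^-1 x; rewrite mulVg lam1 => h.
by rewrite -[lam b x^-1]mulg1 -(mulgV (lam b x)) mulgA -h mul1g.
Qed.

Lemma lam_one x : lam 1 x = x.
Proof. by rewrite /lam invg1 mul1g -{1}one_eq circ1x. Qed.

Lemma lam_comp b b' c : lam b (lam b' c) = lam (circ b b') c.
Proof.
rewrite [lam b' c]/lam lamM lamV /lam invMg invgK circA !mulgA.
by rewrite mulgK.
Qed.

Lemma lam_inj b : injective (lam b).
Proof. by move=> x y /mulgI /circI. Qed.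

Lemma lam_surj b y : lam b (lam (cinv b) y) = y.
Proof. by rewrite lam_comp circxV one_eq lam_one. Qed.

Lemma lamX b x n : lam b (x ^+ n) = (lam b x) ^+ n.
Proof. by elim: n => [|n IH]; rewrite ?lam1 // !expgS lamM IH. Qed.

Lemma lamX1 b x n : ((lam b x) ^+ n == 1) = (x ^+ n == 1).
Proof. by rewrite -lamX -{1}(lam1 b) (inj_eq (@lam_inj b)). Qed.

Lemma order_lam b x : #[lam b x] = #[x].
Proof.
apply/eqP; rewrite eqn_dvd; apply/andP; split.
  by rewrite order_dvdn lamX1 expg_order.
by rewrite order_dvdn -(lamX1 b) expg_order.
Qed.

Lemma thetaE a b c : sb_theta A a b c = a * lam b c * a^-1 :> gT.
Proof. by []. Qed.

Lemma theta_comp a b a' b' c :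
  sb_theta A a b (sb_theta A a' b' c) = sb_theta A (a * lam b a') (circ b b') c.
Proof. by rewrite !thetaE (lamM b (a' * lam b' c) a'^-1) (lamM b a' (lam b' c)) lamV lam_comp [in RHS]invMg !mulgA. Qed.

Lemma theta_id c : sb_theta A (1 : gT) (1 : gT) c = c.
Proof. by rewrite thetaE lam_one invg1 mulg1 mul1g. Qed.

Lemma theta_inv a b y :
  sb_theta A (lam (cinv b) a^-1) (cinv b) (sb_theta A a b y) = y.
Proof.
by rewrite theta_comp -lamM mulVg lam1 circVx one_eq theta_id.
Qed.

Lemma order_theta a b c : #[sb_theta A a b c : gT] = #[c : gT].
Proof.
rewrite thetaE.
have -> : a * lam b c * a^-1 = (lam b c) ^ a^-1 by rewrite /conjg invgK -mulgA.
by have := orderJ (lam b c) a^-1; move=> ->; exact: order_lam.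
Qed.


Lemma orbP c y : reflect (exists a, exists b, y = sb_theta A a b c) (y \in theta_orbit A c).
Proof.
apply: (iffP idP) => [/imset2P [a b _ _ ->] | [a [b ->]]]; first by exists a, b.
exact: imset2_f.
Qed.

Lemma mem_orb c : c \in theta_orbit A c.
Proof. by apply/orbP; exists 1, 1; rewrite theta_id. Qed.

Definition fib c y := [set h : gT * gT | sb_theta A h.1 h.2 c == y].
Definition fmap a b (h : gT * gT) : gT * gT := (a * lam b h.1, circ b h.2).

Lemma fmap_inj a b : injective (fmap a b).
Proof. by move=> [x1 y1] [x2 y2] [/mulgI/lam_inj -> /circI ->]. Qed.

Lemma fib_le c x a b : #|fib c x| <= #|fib c (sb_theta A a b x)|.
Proof.
rewrite -(card_imset _ (@fmap_inj a b)); apply: subset_leq_card.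
apply/subsetP => _ /imsetP[[h1 h2] hin ->]; rewrite !inE /= in hin *.
by rewrite /fmap /= -theta_comp (eqP hin).
Qed.

Lemma fib_eq c a b : #|fib c (sb_theta A a b c)| = #|fib c c|.
Proof.
apply/eqP; rewrite eqn_leq fib_le andbT.
by have := fib_le c (sb_theta A a b c) (lam (cinv b) a^-1) (cinv b); rewrite theta_inv.
Qed.

Lemma card_orbit_dvd c : #|theta_orbit A c| %| (#|{: gT}| * #|{: gT}|)%N.
Proof.
have -> : (#|{: gT}| * #|{: gT}|)%N = \sum_(h : gT * gT) 1 by rewrite sum1_card card_prod.
rewrite (partition_big (fun h : gT * gT => sb_theta A h.1 h.2 c) (mem (theta_orbit A c))) /=; last first.
  by move=> h _; apply/orbP; exists h.1, h.2.
rewrite (eq_bigr (fun _ => #|fib c c|)) ?sum_nat_const ?dvdn_mulr //.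
move=> y /orbP [a [b ->]]; rewrite -(fib_eq c a b) sum1dep_card.
by apply: eq_card => h; rewrite !inE.
Qed.

Definition central x := forall w, x * w = w * x.

Lemma central_lam b x : central x -> central (lam b x).
Proof.
move=> cx w; rewrite -(lam_surj b w) -!lamM; congr (lam b _); exact: cx.
Qed.

Lemma central_lam_inv b x : central (lam b x) -> central x.
Proof. by move=> cx w; apply: (@lam_inj b); rewrite (lamM b x w) (lamM b w x). Qed.

Lemma thetaC a b x : central (lam b x) -> sb_theta A a b x = lam b x.
Proof. by move=> cx; rewrite thetaE -mulgA cx mulKVg. Qed.

Lemma central_theta a b x : central x -> central (sb_theta A a b x).
Proof. by move=> /(central_lam b) cx; rewrite thetaC. Qed.

Lemma central_theta_inv a b x : central (sb_theta A a b x) -> central x.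
Proof.
move=> cx; apply: (central_lam_inv (b := b)).
have e : lam b x = sb_theta A a b x.
  have e0 : lam b x = a^-1 * sb_theta A a b x * a by rewrite thetaE -!mulgA mulKg mulVg mulg1.
  by rewrite e0 -mulgA cx mulKg.
by move=> w; rewrite e; exact: cx.
Qed.

Lemma inZ x : reflect (central x) (x \in 'Z([set: gT])).
Proof.
apply: (iffP (centerP [set: gT] x)) => [[_ cx] w | cx]; first exact: cx w (in_setT w).
by split=> [|w _]; [exact: in_setT | exact: cx].
Qed.

Lemma main_sec : #|Theta_vertices A| = 1%N -> forall x y : gT, x * y = y * x.
Proof.
move=> /eqP/cards1P [L0 HL].
have : L0 \in Theta_vertices A by rewrite HL set11.
rewrite inE => /andP [/imsetP [c _ Lc] L0gt1].
have sing : forall c', c' \notin L0 -> forall a b : gT, sb_theta A a b c' = c'.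
  move=> c' nc a b; apply/eqP; apply/negPn/negP => ne.
  have : theta_orbit A c' \notin Theta_vertices A.
    by rewrite HL in_set1; apply: contra nc => /eqP <-; exact: mem_orb.
  rewrite inE negb_and => /orP [/negP []|]; first by apply/imsetP; exists c'.
  rewrite -leqNgt => le1.
  have : #|[set (c' : T); (sb_theta A a b c' : T)]| <= #|theta_orbit A c'|.
    apply: subset_leq_card; apply/subsetP => z; rewrite !inE => /orP[] /eqP ->.
      exact: mem_orb.
    by apply/orbP; exists a, b.
  by rewrite cards2 eq_sym ne => h; have := leq_trans h le1.
have outC : forall c' : gT, c' \notin L0 -> central c'.
  move=> c' nc w; have := sing c' nc w^-1 1.
  rewrite thetaE lam_one invgK => h.
  by rewrite -{2}h !mulgA mulgV mul1g.
move=> x y; apply/eqP; apply/negPn/negP => nxy.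
have notall : ~ (forall z, central z).
  by move=> H; move: nxy; rewrite (H x y) eqxx.
have LC : forall z : gT, z \in L0 -> ~ central z.
  move=> z zL cz; apply: notall => w.
  have cc : central c.
    move: zL; rewrite Lc => /orbP [a [b ez]]; rewrite ez in cz; exact: central_theta_inv cz.
  case: (boolP (w \in L0)) => wL; last exact: outC.
  move: wL; rewrite Lc => /orbP [a [b ->]]; exact: central_theta.
have LE : forall z : gT, (z \in L0) = (z \notin 'Z([set: gT])).
  move=> z; apply/idP/idP => [zL|]; first by apply/negP => /inZ; exact: LC z zL.
  by apply: contraR => /outC /inZ.
have ordL : forall z : gT, z \in L0 -> #[z] = #[c : gT].
  by move=> z; rewrite Lc => /orbP [a [b ->]]; exact: order_theta.
have cL : (c : gT) \in L0 by rewrite Lc mem_orb.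
have cZ : (c : gT) \notin 'Z([set: gT]) by rewrite -LE.
have n1 : 1 < #[c : gT].
  rewrite ltn_neqAle order_gt0 andbT eq_sym order_eq1; apply/negP => /eqP c1.
  by move: cZ; rewrite c1 group1.
have pp : prime (pdiv #[c : gT]) := pdiv_prime n1.
set n := #[c : gT] in n1 pp ordL *.
set p := pdiv n in pp *.
have pn : p.-nat n.
  have e := consttC p (c : gT).
  case: (boolP ((c : gT).`_p \in L0)) => [hp|].
    by move: (ordL _ hp); rewrite order_constt => <-; exact: part_pnat.
  rewrite LE negbK => hp.
  case: (boolP ((c : gT).`_p^' \in L0)) => [hq|]; last first.
    by rewrite LE negbK => hq; move: cZ; rewrite -e groupM.
  move: (ordL _ hq); rewrite order_constt => e2.
  have : p \in p^'.
    apply: (pnatPpi (n := n)); first by rewrite -e2 part_pnat.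
    by rewrite mem_primes pp ltnW // pdiv_dvd.
  by rewrite !inE eqxx.
have pG : p.-group [set: gT].
  apply/pgroupP => q qp qd.
  have [z _ oz] := Cauchy qp qd.
  have qn : q %| n.
    case: (boolP (z \in L0)) => zL; first by rewrite -oz ordL.
    move: zL; rewrite LE negbK => zZ.
    have czL : (c : gT) * z \in L0.
      rewrite LE; apply: contra cZ => czZ.
      by rewrite -(mulgK z (c : gT)) groupM ?groupV.
    rewrite -oz order_dvdn.
    have := expg_order ((c : gT) * z); rewrite (ordL _ czL) expgMn.
      by rewrite expg_order mul1g => ->.
    by move/inZ: zZ => cz; rewrite /commute cz.
  apply: (pnatPpi pn).
  by rewrite mem_primes qp ltnW.
have ZE : forall z : gT, (z \in L0) = (z \in ~: 'Z([set: gT])) by move=> z; rewrite inE LE.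
have cardE : (#|L0| + #|'Z([set: gT])|)%N = #|[set: gT]|.
  have cL' : #|L0| = #|~: 'Z([set: gT])|.
    pose f : T -> gT := fun z => z.
    have fi : injective f by [].
    rewrite -(card_imset _ fi); apply: eq_card => z.
    rewrite -ZE; apply/imsetP/idP => [[w wL ->] //|zL]; by exists z.
  by rewrite cL' addnC cardsC cardsT.
have pL : p.-nat #|L0|.
  rewrite Lc; apply: pnat_dvd (card_orbit_dvd c) _.
  by move: pG; rewrite /pgroup cardsT pnatM => ->.
have pZ : p.-nat #|'Z([set: gT])|.
  exact: pnat_dvd (cardSg (center_sub _)) pG.
have eLZ : #|L0| = #|'Z([set: gT])| by apply: (pnat_sum_eq pp pL pZ); rewrite cardE; exact: pG.
have ix : #|[set: gT] : 'Z([set: gT])| = 2.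
  apply/eqP; rewrite -(eqn_pmul2l (cardG_gt0 'Z([set: gT]))) (Lagrange (center_sub _)).
  by rewrite -cardE eLZ muln2 addnn.
have ab : abelian [set: gT].
  apply: cyclic_center_factor_abelian; apply: prime_cyclic.
  by rewrite card_quotient ?ix // normal_norm // center_normal.
move: nxy; rewrite (centsP ab x (in_setT x) y (in_setT y)).
by rewrite eqxx.
Qed.

End S.

Theorem mainTheorem19 (T : finType) (A : skew_brace T) :
  #|Theta_vertices A| = 1 ->
  forall x y : T, sb_add A x y = sb_add A y x.
Proof. move=> H x y; exact: (main_sec H x y). Qed.
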